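(* Let $\vec{\Phi}_1,\vec{\Phi}_2\in\mathbb{R}^2$ be unit vectors with $\vec{\Phi}_1\cdot\vec{\Phi}_2=1/2$, let $\vec{\phi}_1=-(\vec{\Phi}_1+\vec{\Phi}_2)/3$, and let $\mathbb{E}_1=\{n\vec{\Phi}_1+m\vec{\Phi}_2+\vec{\phi}_1 \mid n,m\in\mathbb{Z}\}$. For $\vec{\lambda}\in\mathbb{R}^2$ put $N(\vec{\lambda})=\vec{\lambda}\cdot\vec{\lambda}$. Let $L>0$. Then there are exactly $3$ distinct vectors $\vec{\lambda}\in\mathbb{E}_1$ with $\sqrt{N(\vec{\lambda})}=L$ if and only if $L=3^{-1/2}\prod_j m_j^{\mu_j}$, a finite product with exponents $\mu_j\in\mathbb{N}$ and primes $m_j\equiv 2\pmod{3}$.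
   Context: $\mathbb{E}_1$ is the triangular lattice spanned by $\vec{\Phi}_1,\vec{\Phi}_2$ (angle $60^\circ$) translated by $\vec{\phi}_1$; $N$ is the squared Euclidean norm. *)

(* Defs.v *)
From HB Require Import structures.
From mathcomp Require Import all_boot all_order all_algebra.
From mathcomp Require Import reals.
Set Implicit Arguments. Unset Strict Implicit. Unset Printing Implicit Defensive.
Import Order.TTheory GRing.Theory Num.Theory.
Local Open Scope ring_scope.

Section Vec.
Variable R : realType.

Definition vadd (u v : R * R) : R * R := (u.1 + v.1, u.2 + v.2).
Definition vscale (a : R) (u : R * R) : R * R := (a * u.1, a * u.2).
Definition dot (u v : R * R) : R := u.1 * v.1 + u.2 * v.2.
Definition Nsq (u : R * R) : R := dot u u.

Definition phi1 (P1 P2 : R * R) : R * R := vscale (- (1 / 3)) (vadd P1 P2).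

Definition inE1 (P1 P2 : R * R) (x : R * R) : Prop :=
  exists n m : int,
    x = vadd (vadd (vscale (n%:~R) P1) (vscale (m%:~R) P2)) (phi1 P1 P2).
End Vec.

(* Main.v *)
Require Import Defs.
From HB Require Import structures.
From mathcomp Require Import all_boot all_order fingroup pgroup.
From mathcomp Require Import all_boot all_order all_algebra.
From mathcomp Require Import finfield.
From mathcomp Require Import reals.
From mathcomp Require Import zify ring lra.
Set Implicit Arguments. Unset Strict Implicit. Unset Printing Implicit Defensive.
Import Order.TTheory GRing.Theory Num.Theory.
Local Open Scope ring_scope.

Definition F (a b : int) : int := a * a + a * b + b * b.

Lemma fin_inert (K : finFieldType) (x y : K) :
  (#|K| %% 3 = 2)%N -> (3%:R : K) != 0 -> x * x + x * y + y * y = 0 -> x = 0 /\ y = 0.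
Proof.
move=> hK h3 hxy.
have [y0|yn0] := eqVneq y 0.
  by move: hxy; rewrite y0 !mulr0 !addr0 => /eqP; rewrite mulf_eq0 orbb => /eqP.
exfalso.
set t := x / y.
have ht : t * t + t + 1 = 0.
  have : (x * x + x * y + y * y) / (y * y) = 0 by rewrite hxy mul0r.
  rewrite /t => <-; field; by rewrite yn0.
have t3 : t ^+ 3 = 1.
  apply/eqP; rewrite -subr_eq0.
  have -> : t ^+ 3 - 1 = (t - 1) * (t * t + t + 1) by ring.
  by rewrite ht mulr0.
have tc := expf_card t.
move: tc.
rewrite (divn_eq #|K| 3) hK exprD mulnC exprM t3 expr1n mul1r => t2.
have t1 : t * t - t = 0 by rewrite -expr2 t2 subrr.
have : t * (t - 1) = 0 by rewrite mulrBr mulr1.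
move/eqP; rewrite mulf_eq0 => /orP [/eqP t0|].
  by move: ht; rewrite t0 !mul0r !add0r => /eqP; rewrite oner_eq0.
rewrite subr_eq0 => /eqP t1'.
by move/eqP: h3; apply; rewrite -ht t1'; ring.
Qed.

Lemma F_cast (K : nzRingType) (a b : int) :
  ((F a b)%:~R : K) = a%:~R * a%:~R + a%:~R * b%:~R + b%:~R * b%:~R.
Proof. by rewrite /F !intrD !intrM. Qed.

Lemma inert (p : nat) (a b : int) : prime p -> (p %% 3 = 2)%N ->
  (p%:Z %| F a b)%Z -> (p%:Z %| a)%Z /\ (p%:Z %| b)%Z.
Proof.
move=> pp p3; have ch := pchar_Fp pp.
rewrite !(dvdz_pcharf ch) F_cast => /eqP h.
have p3' : (#|'F_p| %% 3 = 2)%N by rewrite card_Fp.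
have [] := fin_inert p3' _ h.
  rewrite -(dvdn_pcharf ch); apply/negP => d.
  have := dvdn_leq (isT : (0 < 3)%N) d; have := prime_gt1 pp => h1 h2.
  have : p = 2%N by lia.
  by move=> e; rewrite e in d.
by move=> -> ->; rewrite eqxx.
Qed.

Lemma cube_root (p : nat) : prime p -> (p %% 3 = 1)%N ->
  exists t : 'F_p, t * t + t + 1 = 0.
Proof.
move=> pp p3.
have d3 : (3 %| #|[set: {unit 'F_p}]|)%N.
  rewrite card_finField_unit card_Fp //; have := prime_gt1 pp => h1.
  apply/dvdnP; exists (p %/ 3)%N; lia.
have [x _ ox] := Cauchy (isT : prime 3) d3.
have x3 : (x ^+ 3)%g = 1%g by rewrite -ox expg_order.
have x1 : x != 1%g by rewrite -order_eq1 ox.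
exists (val x).
have v3 : val x ^+ 3 = 1 by rewrite -FinRing.val_unitX x3.
have v1 : val x != 1.
  apply: contra x1 => /eqP h; apply/eqP; apply: val_inj; by rewrite h.
have : (val x - 1) * (val x * val x + val x + 1) = 0.
  have -> : (val x - 1) * (val x * val x + val x + 1) = val x ^+ 3 - 1 by ring.
  by rewrite v3 subrr.
move/eqP; rewrite mulf_eq0 subr_eq0 (negbTE v1) /= => /eqP; exact.
Qed.

Lemma sqrt_bound (p : nat) : exists s : nat, (s * s <= p < s.+1 * s.+1)%N.
Proof.
elim: p => [|p [s /andP [h1 h2]]]; first by exists 0%N.
case: (ltnP p.+1 (s.+1 * s.+1)) => h3.
  by exists s; rewrite h3 andbT; lia.
exists s.+1; apply/andP; split; first by [].
have : p.+1 = (s.+1 * s.+1)%N by lia.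
move=> ->; nia.
Qed.

Lemma F_pos (x y : int) : (x != 0) || (y != 0) -> 0 < F x y.
Proof.
move=> h; rewrite /F.
have : 4 * (x * x + x * y + y * y) = (2 * x + y) * (2 * x + y) + 3 * (y * y) by ring.
case/orP: h => h; nia.
Qed.

Lemma thue (p : nat) (t : 'F_p) : prime p -> t * t + t + 1 = 0 ->
  exists x y : int, [/\ (x != 0) || (y != 0), (F x y < 3 * p%:Z)%R & (p%:Z %| F x y)%Z].
Proof.
move=> pp ht.
have [s /andP [hs1 hs2]] := sqrt_bound p.
pose g := fun ij : 'I_s.+1 * 'I_s.+1 => (ij.1%:R - t * ij.2%:R : 'F_p).
have : [exists i, exists j, (g i == g j) && (i != j)].
  apply: contraT => H; exfalso.
  have inj : injective g.
    move=> i j e; apply/eqP; apply/negPn/negP => ne; move/negP: H; apply.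
    by apply/existsP; exists i; apply/existsP; exists j; rewrite e eqxx ne.
  have := leq_card g inj; rewrite card_prod card_ord card_Fp //; lia.
case/existsP => [[a b]] /existsP [[a' b']] /andP [/eqP e ne].
exists (a%:Z - a'%:Z), (b%:Z - b'%:Z); split.
- apply: contraT; rewrite negb_or => /andP [/negPn/eqP h1 /negPn/eqP h2]; exfalso; move/negP: ne; apply.
  apply/eqP; congr pair; apply: val_inj => /=; lia.
- have ha := ltn_ord a; have ha' := ltn_ord a'; have hb := ltn_ord b; have hb' := ltn_ord b'.
  rewrite /F.
  have : (a%:Z - a'%:Z) * (a%:Z - a'%:Z) + (a%:Z - a'%:Z) * (b%:Z - b'%:Z) + (b%:Z - b'%:Z) * (b%:Z - b'%:Z) <= 3 * (s%:Z * s%:Z).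
    nia.
  have : s%:Z * s%:Z < p%:Z.
    have hne : (s * s != p)%N.
      apply/eqP => hsp; move: pp; rewrite -hsp.
      case: s {hs1 hs2 g a b a' b' e ne ha ha' hb hb' hsp} => [|[|s]] //.
      by case/primeP => _ /(_ s.+2 (dvdn_mulr _ (dvdnn _))) /orP [] /eqP h; nia.
    lia.
  lia.
- rewrite (dvdz_pcharf (pchar_Fp pp)) F_cast.
  move: e; rewrite /g /= => e.
  have ex : ((a%:Z - a'%:Z)%:~R : 'F_p) = t * (b%:Z - b'%:Z)%:~R.
    rewrite !intrB -!pmulrn.
    have h : (a%:R - t * b%:R) - (a'%:R - t * b'%:R) = 0 :> 'F_p by rewrite e subrr.
    apply/eqP; rewrite -subr_eq0; apply/eqP; rewrite -[RHS]h; ring.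
  rewrite ex.
  have -> : t * (b%:Z - b'%:Z)%:~R * (t * (b%:Z - b'%:Z)%:~R) + t * (b%:Z - b'%:Z)%:~R * (b%:Z - b'%:Z)%:~R +
     (b%:Z - b'%:Z)%:~R * (b%:Z - b'%:Z)%:~R = (t * t + t + 1) * ((b%:Z - b'%:Z)%:~R * (b%:Z - b'%:Z)%:~R :'F_p) by ring.
  by rewrite ht mul0r.
Qed.

Lemma norm_p1 (p : nat) : prime p -> (p %% 3 = 1)%N -> exists u v : int, F u v = p%:Z.
Proof.
move=> pp p3.
have [t ht] := cube_root pp p3.
have [x [y [hne hlt hd]]] := thue pp ht.
have hpos := F_pos hne.
have [k hk] := dvdzP hd.
have hp1 := prime_gt1 pp.
have : (k = 1) \/ (k = 2).
  have : 0 < k by nia.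
  have : k < 3 by nia.
  lia.
case=> ek; rewrite ek in hk.
  by exists x, y; rewrite hk mul1r.
exfalso.
have := inert (isT : prime 2) (erefl : (2 %% 3 = 2)%N) (_ : (2%:Z %| F x y)%Z).
case; first by rewrite hk dvdz_mulr.
move=> /dvdzP [x' ex] /dvdzP [y' ey]; rewrite ex ey in hk.
have : (F (x' * 2) (y' * 2)) = 4 * F x' y' by rewrite /F; ring.
rewrite hk => h4.
have : (2 * p%:Z = 4 * F x' y') by rewrite -h4 mulrC.
move=> h2.
have d2 : (2 %| p)%N by apply/dvdnP; exists (`|F x' y'|)%N; lia.
case/primeP: pp => _ /(_ 2%N d2) /orP [] /eqP h; lia.
Qed.

Definition six (q A B : int) : Prop :=
  (A = q /\ B = q) \/ (A = - q /\ B = - q) \/ (A = q /\ B = -2 * q) \/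
  (A = - q /\ B = 2 * q) \/ (A = -2 * q /\ B = q) \/ (A = 2 * q /\ B = - q).

Lemma base3 (A B : int) : F A B = 3 -> six 1 A B.
Proof.
rewrite /F => h.
have : 4 * (A * A + A * B + B * B) = (2 * A + B) * (2 * A + B) + 3 * (B * B) by ring.
have : 4 * (A * A + A * B + B * B) = (2 * B + A) * (2 * B + A) + 3 * (A * A) by ring.
move=> e1 e2.
have hA : A = -2 \/ A = -1 \/ A = 0 \/ A = 1 \/ A = 2 by nia.
have hB : B = -2 \/ B = -1 \/ B = 0 \/ B = 1 \/ B = 2 by nia.
rewrite /six.
clear e1 e2; move: h.
by case: hA => [->|[->|[->|[->|->]]]]; case: hB => [->|[->|[->|[->|->]]]]; lia.
Qed.

Lemma uniq_rep (Q : nat) : (0 < Q)%N ->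
  (forall p, prime p -> (p %| Q)%N -> (p %% 3 = 2)%N) ->
  forall A B : int, F A B = 3 * (Q%:Z * Q%:Z) -> six Q%:Z A B.
Proof.
elim/ltn_ind: Q => Q IH Q0 HQ A B hF.
have [Q1|Q1] := leqP Q 1%N.
  have e : Q = 1%N by lia.
  by rewrite e in hF *; apply: base3; rewrite hF.
have pp := pdiv_prime Q1.
have pd := pdiv_dvd Q.
set p := pdiv Q in pp pd.
have p3 := HQ p pp pd.
have [Q' eQ] := dvdnP pd.
have hd : (p%:Z %| F A B)%Z.
  rewrite hF eQ; apply/dvdzP; exists (3 * (Q'%:Z * Q'%:Z) * p%:Z); rewrite PoszM; ring.
have [/dvdzP [a ea] /dvdzP [b eb]] := inert pp p3 hd.
have pgt := prime_gt1 pp.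
have hF' : F a b = 3 * (Q'%:Z * Q'%:Z).
  move: hF; rewrite ea eb eQ PoszM /F => h.
  have hp0 : (p%:Z * p%:Z) != 0 by apply/eqP; nia.
  apply: (mulIf hp0).
  have -> : F a b * (p%:Z * p%:Z) = a * p%:Z * (a * p%:Z) + a * p%:Z * (b * p%:Z) + b * p%:Z * (b * p%:Z) by rewrite /F; ring.
  rewrite h; ring.
have Q'0 : (0 < Q')%N by rewrite eQ muln_gt0 in Q0; case/andP: Q0.
have lt : (Q' < Q)%N by rewrite eQ; nia.
have HQ' : forall p, prime p -> (p %| Q')%N -> (p %% 3 = 2)%N.
  move=> r rp rd; apply: HQ rp _; rewrite eQ; exact: dvdn_mulr.
have := IH Q' lt Q'0 HQ' a b hF'.
rewrite /six ea eb eQ PoszM.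
case=> [[-> ->]|[[-> ->]|[[-> ->]|[[-> ->]|[[-> ->]|[-> ->]]]]]].
all: first [ left; split; ring | right; left; split; ring | right; right; left; split; ring
  | right; right; right; left; split; ring | right; right; right; right; left; split; ring
  | right; right; right; right; right; split; ring ].
Qed.

Definition good (A : int) : Prop := (A %% 3)%Z = 2.
Definition Gp (M : int) (x : int * int) : Prop := [/\ good x.1, good x.2 & F x.1 x.2 = M].
Definition no4 (M : int) : Prop := forall x1 x2 x3 x4 : int * int,
  Gp M x1 -> Gp M x2 -> Gp M x3 -> Gp M x4 ->
  x1 <> x2 -> x1 <> x3 -> x1 <> x4 -> x2 <> x3 -> x2 <> x4 -> x3 <> x4 -> False.

Lemma not_sq (p : nat) (u : int) : prime p -> (p %% 3 = 1)%N -> p%:Z <> u * u /\ p%:Z <> 3 * (u * u).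
Proof.
move=> pp p3; split=> h; last by lia.
have e : p = (`|u| * `|u|)%N by nia.
move: pp; rewrite e.
case/primeP => h1 /(_ `|u|%N (dvdn_mulr _ (dvdnn _))) /orP [] /eqP h2; nia.
Qed.

Lemma step2 (M c : int) : good c -> M = 3 * (c * c) -> no4 M ->
  forall p, prime p -> (p %| `|c|)%N -> (p %% 3 = 2)%N.
Proof.
move=> gc eM H4 p pp pd.
have pgt := prime_gt1 pp.
have : (p %% 3 = 0 \/ p %% 3 = 1 \/ p %% 3 = 2)%N by lia.
case=> [p0|[p1|//]]; exfalso.
  have d3 : (3 %| p)%N by apply/dvdnP; exists (p %/ 3)%N; lia.
  case/primeP: pp => _ /(_ 3%N d3) /orP [] /eqP h3; first by [].
  have : (3 %| `|c|)%N by rewrite h3.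
  rewrite /good in gc; lia.
have [u [v huv]] := norm_p1 pp p1.
have [d ed] : exists d : int, c = d * p%:Z.
  by apply/dvdzP; rewrite /dvdz /=.
have d0 : d != 0 by apply/eqP => d0; rewrite d0 mul0r in ed; rewrite ed /good in gc; lia.
pose U := u * u - v * v.
pose V := 2 * u * v + v * v.
have hV : V != 0.
  apply/eqP => hV.
  have : v * (2 * u + v) = 0 by rewrite -hV /V; ring.
  move/eqP; rewrite mulf_eq0 => /orP [] /eqP h.
    have [h1 _] := not_sq u pp p1; apply: h1; rewrite -huv /F h; ring.
  have [_ h1] := not_sq u pp p1; apply: h1; rewrite -huv /F.
  have -> : v = -2 * u by lia.
  ring.
have hU : U != 0.
  apply/eqP => hU.
  have : (u - v) * (u + v) = 0 by rewrite -hU /U; ring.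
  move/eqP; rewrite mulf_eq0 => /orP [] /eqP h.
    have [_ h1] := not_sq u pp p1; apply: h1; rewrite -huv /F.
    have -> : v = u by lia.
    ring.
  have [h1 _] := not_sq u pp p1; apply: h1; rewrite -huv /F.
  have -> : v = - u by lia.
  ring.
have hUV : U + V != 0.
  apply/eqP => hUV.
  have : u * (u + 2 * v) = 0 by rewrite -hUV /U /V; ring.
  move/eqP; rewrite mulf_eq0 => /orP [] /eqP h.
    have [h1 _] := not_sq v pp p1; apply: h1; rewrite -huv /F h; ring.
  have [_ h1] := not_sq v pp p1; apply: h1; rewrite -huv /F.
  have -> : u = -2 * v by lia.
  ring.
have FW : forall e : int, e * e = 1 -> F (e * d * (U - V)) (e * d * (U + 2 * V)) = M.
  move=> e ee; rewrite eM ed -huv /F /U /V.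
  have -> : e * d * (u * u - v * v - (2 * u * v + v * v)) * (e * d * (u * u - v * v - (2 * u * v + v * v))) +
    e * d * (u * u - v * v - (2 * u * v + v * v)) * (e * d * (u * u - v * v + 2 * (2 * u * v + v * v))) +
    e * d * (u * u - v * v + 2 * (2 * u * v + v * v)) * (e * d * (u * u - v * v + 2 * (2 * u * v + v * v))) =
    (e * e) * (3 * (d * (u * u + u * v + v * v) * (d * (u * u + u * v + v * v)))) by ring.
  by rewrite ee mul1r.
have [e [ee ge1 ge2]] : exists e : int, [/\ e * e = 1, good (e * d * (U - V)) & good (e * d * (U + 2 * V))].
  have F1 := FW 1 (mulr1 1).
  have nd : ~ (3%:Z %| d * (U - V))%Z.
    move=> /dvdzP [r er].
    have [s es] : exists s, d * (U + 2 * V) = s * 3.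
      by exists (r + d * V); transitivity (d * (U - V) + 3 * (d * V)); [ring | rewrite er; ring].
    move: F1; rewrite !mul1r er es eM /F => F1.
    rewrite /good in gc; nia.
  have : ((d * (U - V)) %% 3 = 1 \/ (d * (U - V)) %% 3 = 2)%Z by lia.
  have e3 : d * (U + 2 * V) = d * (U - V) + 3 * (d * V) by ring.
  case=> h.
    exists (-1); split; first by ring.
      rewrite /good -mulrA; lia.
    rewrite /good -mulrA e3; lia.
  exists 1; split; first by ring.
    rewrite /good -mulrA; lia.
  rewrite /good -mulrA e3; lia.
have ed0 : e * d != 0 by rewrite mulf_eq0 negb_or d0 andbT; apply/eqP => e0; rewrite e0 in ee; lia.
have c0 : c != 0 by apply/eqP => c0; rewrite /good c0 in gc.
have g2 : good (-2 * c) by rewrite /good in gc *; lia.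
have Fc1 : F c c = M by rewrite eM /F; ring.
have Fc2 : F c (-2 * c) = M by rewrite eM /F; ring.
have Fc3 : F (-2 * c) c = M by rewrite eM /F; ring.
apply: (H4 (c, c) (c, -2 * c) (-2 * c, c) (e * d * (U - V), e * d * (U + 2 * V))).
- by split.
- by split.
- by split.
- by split => //; apply: FW.
- case=> h; lia.
- case=> h; lia.
- case=> h1 h2; move/eqP: hV; apply; apply/eqP.
  have : e * d * (3 * V) = 0.
    have -> : e * d * (3 * V) = e * d * (U + 2 * V) - e * d * (U - V) by ring.
    by rewrite -h1 -h2 subrr.
  move/eqP; rewrite mulf_eq0 (negbTE ed0) /= => /eqP; lia.
- case=> h; lia.
- case=> h1 h2; move/eqP: hU; apply; apply/eqP.
  have : e * d * (3 * U) = 0.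
    have -> : e * d * (3 * U) = e * d * (U + 2 * V) + 2 * (e * d * (U - V)) by ring.
    by rewrite -h1 -h2; ring.
  move/eqP; rewrite mulf_eq0 (negbTE ed0) /= => /eqP; lia.
- case=> h1 h2; move/eqP: hUV; apply; apply/eqP.
  have : e * d * (3 * (U + V)) = 0.
    have -> : e * d * (3 * (U + V)) = e * d * (U - V) + 2 * (e * d * (U + 2 * V)) by ring.
    by rewrite -h1 -h2; ring.
  move/eqP; rewrite mulf_eq0 (negbTE ed0) /= => /eqP; lia.
Qed.

Lemma forward (M A B : int) : Gp M (A, B) -> no4 M ->
  exists c : int, [/\ good c, M = 3 * (c * c) &
    forall p, prime p -> (p %| `|c|)%N -> (p %% 3 = 2)%N].
Proof.
move=> [/= gA gB hF] H4.
suff [c [gc eM]] : exists c, good c /\ M = 3 * (c * c).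
  by exists c; split => //; apply: step2 gc eM H4.
have [e1|n1] := eqVneq A B.
  by exists A; split => //; rewrite -hF /F e1; ring.
have [e2|n2] := eqVneq B (-2 * A).
  by exists A; split => //; rewrite -hF /F e2; ring.
have [e3|n3] := eqVneq A (-2 * B).
  by exists B; split => //; rewrite -hF /F e3; ring.
exfalso.
rewrite /good in gA gB.
apply: (H4 (A, B) (B, - A - B) (- A - B, A) (B, A)).
1-4: split; rewrite /good /=; try lia; rewrite -hF /F /=; ring.
all: case; lia.
Qed.

Section Real.
Variable R : realType.
Variables P1 P2 : R * R.
Hypothesis h11 : dot P1 P1 = 1.
Hypothesis h22 : dot P2 P2 = 1.
Hypothesis h12 : dot P1 P2 = 1 / 2.

Definition comb (a b : R) : R * R := vadd (vscale a P1) (vscale b P2).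
Definition pt (A B : int) : R * R := comb (A%:~R / 3) (B%:~R / 3).

Lemma comb_dot1 a b : dot (comb a b) P1 = a + b / 2.
Proof.
transitivity (a * dot P1 P1 + b * dot P1 P2); first by rewrite /comb /dot /vadd /vscale /=; ring.
by rewrite h11 h12; field.
Qed.

Lemma comb_dot2 a b : dot (comb a b) P2 = a / 2 + b.
Proof.
transitivity (a * dot P1 P2 + b * dot P2 P2); first by rewrite /comb /dot /vadd /vscale /=; ring.
by rewrite h22 h12; field.
Qed.

Lemma comb_N a b : Nsq (comb a b) = a * a + a * b + b * b.
Proof.
transitivity (a * a * dot P1 P1 + 2 * a * b * dot P1 P2 + b * b * dot P2 P2);
  first by rewrite /comb /Nsq /dot /vadd /vscale /=; ring.
by rewrite h11 h22 h12; field.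
Qed.

Lemma comb_inj a b a' b' : comb a b = comb a' b' -> a = a' /\ b = b'.
Proof.
move=> e.
have e1 := comb_dot1 a b; have e2 := comb_dot2 a b.
rewrite e comb_dot1 in e1; rewrite e comb_dot2 in e2.
split; lra.
Qed.

Lemma pt_inj A B A' B' : pt A B = pt A' B' -> A = A' /\ B = B'.
Proof.
move=> /comb_inj [e1 e2]; have n3 : (3 : R) != 0 by rewrite pnatr_eq0.
split; apply: (@intr_inj R).
  by rewrite -(divfK n3 A%:~R) e1 divfK.
by rewrite -(divfK n3 B%:~R) e2 divfK.
Qed.

Lemma pt_N A B : Nsq (pt A B) = (F A B)%:~R / 9.
Proof. by rewrite comb_N F_cast; field. Qed.

Lemma inE1P x : inE1 P1 P2 x <-> exists A B, [/\ good A, good B & x = pt A B].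
Proof.
split.
  move=> [n [m ->]]; exists (3 * n - 1), (3 * m - 1); split; rewrite /good; try lia.
  rewrite /pt /comb /vadd /vscale /phi1 /=; congr pair; rewrite !intrB !intrM; field; by [].
move=> [A [B [gA gB ->]]].
exists ((A + 1) %/ 3)%Z, ((B + 1) %/ 3)%Z.
have eA : A = 3 * ((A + 1) %/ 3)%Z - 1 by rewrite /good in gA; lia.
have eB : B = 3 * ((B + 1) %/ 3)%Z - 1 by rewrite /good in gB; lia.
rewrite {1}eA {1}eB.
rewrite /pt /comb /vadd /vscale /phi1 /=; congr pair; rewrite !intrB !intrM; field; by [].
Qed.

Lemma sqrt_eq (x y : R) : 0 <= y -> y ^+ 2 = x -> Num.sqrt x = y.
Proof. by move=> y0 <-; rewrite sqrtr_sqr ger0_norm. Qed.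

End Real.

Lemma Nsq_ge0 (R : realType) (x : R * R) : 0 <= Nsq x.
Proof. rewrite /Nsq /dot; nra. Qed.

Lemma prodQ (s : seq (nat * nat)) :
  (forall pe, pe \in s -> prime pe.1 /\ pe.1 %% 3 = 2)%N ->
  (0 < \prod_(pe <- s) pe.1 ^ pe.2)%N /\
  (forall p, prime p -> (p %| \prod_(pe <- s) pe.1 ^ pe.2)%N -> (p %% 3 = 2)%N).
Proof.
elim: s => [|pe s IH] H.
  rewrite big_nil; split => // p pp; rewrite dvdn1 => /eqP p1; by rewrite p1 in pp.
have [pp p3] := H pe (mem_head _ _).
have [IH1 IH2] := IH (fun pe' h => H pe' (mem_behead (s := pe :: s) h)).
rewrite big_cons; split.
  by rewrite muln_gt0 IH1 expn_gt0 prime_gt0.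
move=> r rp; rewrite Euclid_dvdM // => /orP [|]; last exact: IH2.
rewrite Euclid_dvdX // => /andP [d _].
by rewrite dvdn_prime2 // in d; rewrite (eqP d).
Qed.

Theorem theorem3 (R : realType) (P1 P2 : R * R) :
  dot P1 P1 = 1 -> dot P2 P2 = 1 -> dot P1 P2 = 1 / 2 ->
  forall L : R, 0 < L ->
  ((exists a b c : R * R,
      [/\ a <> b, a <> c & b <> c] /\
      forall x : R * R,
        (inE1 P1 P2 x /\ Num.sqrt (Nsq x) = L) <-> (x = a \/ x = b \/ x = c))
   <->
   (exists s : seq (nat * nat),
      (forall pe, pe \in s -> prime pe.1 /\ pe.1 %% 3 = 2)%N /\
      L = (Num.sqrt 3)^-1 * \prod_(pe <- s) (pe.1)%:R ^+ pe.2)).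
Proof.
move=> h11 h22 h12 L L0.
have sq3 : Num.sqrt (3:R) ^+ 2 = 3 by rewrite sqr_sqrtr // ler0n.
have s3 : 0 < Num.sqrt (3:R) by rewrite sqrtr_gt0 ltr0n.
have n9 : (9 : R) != 0 by rewrite pnatr_eq0.
have Fint : forall A B (N : int), Num.sqrt (Nsq (pt P1 P2 A B)) = L -> L ^+ 2 = N%:~R / 9 -> F A B = N.
  move=> A B N hx hL; apply: (@intr_inj R).
  have : Nsq (pt P1 P2 A B) = L ^+ 2 by rewrite -hx sqr_sqrtr // Nsq_ge0.
  rewrite pt_N // hL => h.
  by rewrite -(divfK n9 (F A B)%:~R) h divfK.
split.
- move=> [a [b [c [[nab nac nbc] Hc]]]].
  have [/(inE1P P1 P2 _) [A0 [B0 [gA0 gB0 ea]]] hLa] := (Hc a).2 (or_introl erefl).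
  set M := F A0 B0.
  have hL2 : L ^+ 2 = M%:~R / 9.
    by rewrite -hLa sqr_sqrtr ?Nsq_ge0 // ea pt_N.
  have KT : forall A B, Gp M (A, B) -> pt P1 P2 A B = a \/ pt P1 P2 A B = b \/ pt P1 P2 A B = c.
    move=> A B [/= gA gB hF]; apply: (Hc _).1; split.
      by apply/(inE1P P1 P2 _); exists A, B.
    apply: sqrt_eq; first exact: ltW L0.
    by rewrite hL2 pt_N // hF.
  have d : forall A B A' B', (A, B) <> (A', B') -> pt P1 P2 A B <> pt P1 P2 A' B'.
    by move=> ? ? ? ? ne e; apply: ne; have [-> ->] := pt_inj h11 h22 h12 e.
  have H4 : no4 M.
    move=> [A1 B1] [A2 B2] [A3 B3] [A4 B4] g1 g2 g3 g4 n12 n13 n14 n23 n24 n34.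
    move: (KT _ _ g1) (KT _ _ g2) (KT _ _ g3) (KT _ _ g4) (d _ _ _ _ n12) (d _ _ _ _ n13)
      (d _ _ _ _ n14) (d _ _ _ _ n23) (d _ _ _ _ n24) (d _ _ _ _ n34).
    clear -nab nac nbc.
    by case=> [e1|[e1|e1]]; case=> [e2|[e2|e2]]; case=> [e3|[e3|e3]]; case=> [e4|[e4|e4]];
      move=> d12 d13 d14 d23 d24 d34; congruence.
  have g0 : Gp M (A0, B0) by [].
  have [c0 [gc eM HP]] := forward g0 H4.
  have c00 : (0 < `|c0|)%N by rewrite absz_gt0; apply/eqP => c0z; rewrite /good c0z in gc.
  exists (prime_decomp `|c0|); split.
    move=> [p e] /mem_prime_decomp [pp e0 pd]; split => //; apply: HP pp _.
    exact: dvdn_trans (dvdn_exp e0 (dvdnn p)) pd.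
  have -> : \prod_(pe <- prime_decomp `|c0|) (pe.1)%:R ^+ pe.2 = (`|c0|%N)%:R :> R.
    by rewrite {2}(prod_prime_decomp c00) natr_prod; apply: eq_bigr => pe _; rewrite natrX.
  rewrite -[L]ger0_norm ?ltW // -sqrtr_sqr hL2.
  apply: sqrt_eq.
    by rewrite mulr_ge0 // ?invr_ge0 ?ltW // ler0n.
  rewrite exprMn exprVn sq3 natr_absz intr_norm real_normK ?num_real //.
  by rewrite eM intrM; field.
- move=> [s [Hs HL]].
  have [Q0 HP] := prodQ Hs.
  set Q := (\prod_(pe <- s) pe.1 ^ pe.2)%N in Q0 HP.
  have eQ : \prod_(pe <- s) (pe.1)%:R ^+ pe.2 = Q%:R :> R.
    by rewrite natr_prod; apply: eq_bigr => pe _; rewrite natrX.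
  rewrite eQ in HL.
  have Q3 : (Q %% 3 != 0)%N.
    apply/negP => /eqP h3; have := HP 3%N isT; rewrite /dvdn h3 => /(_ isT); done.
  pose q : int := Q%:Z.
  pose c : int := if (Q %% 3 == 2)%N then q else - q.
  have ecq : c * c = q * q by rewrite /c; case: ifP => _; ring.
  have gc : good c by rewrite /c /good /q; case: ifP => /eqP h; lia.
  have c0 : c != 0 by apply/eqP => c0; rewrite /good c0 in gc.
  have qR : (q%:~R : R) = Q%:R by rewrite /q -pmulrn.
  have hL2 : L ^+ 2 = (3 * (c * c))%:~R / 9.
    by rewrite HL exprMn exprVn sq3 ecq !intrM qR; field.
  exists (pt P1 P2 c c), (pt P1 P2 c (-2 * c)), (pt P1 P2 (-2 * c) c); split.
    split => /(pt_inj h11 h22 h12) [h1 h2]; lia.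
  move=> x; split.
    move=> [/(inE1P P1 P2 _) [A [B [gA gB ->]]] hx].
    have hF := Fint A B _ hx hL2.
    rewrite ecq in hF.
    have := uniq_rep Q0 HP hF.
    rewrite /good in gA gB.
    rewrite /six /c; case: ifP => /eqP hq.
      by case=> [[eA eB]|[[eA eB]|[[eA eB]|[[eA eB]|[[eA eB]|[eA eB]]]]]]; subst A B;
        first [ by left | by right; left | by right; right | exfalso; rewrite /q in gA gB; lia ].
    by case=> [[eA eB]|[[eA eB]|[[eA eB]|[[eA eB]|[[eA eB]|[eA eB]]]]]]; subst A B;
      first [ by left | by right; left | by right; right
        | by left; f_equal; ring | by right; left; f_equal; ring | by right; right; f_equal; ring
        | exfalso; rewrite /q in gA gB; lia ].
  have g2 : good (-2 * c) by rewrite /good in gc *; lia.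
  have hS : forall A B, good A -> good B -> F A B = 3 * (c * c) ->
      inE1 P1 P2 (pt P1 P2 A B) /\ Num.sqrt (Nsq (pt P1 P2 A B)) = L.
    move=> A B gA gB hF; split; first by apply/(inE1P P1 P2 _); exists A, B.
    by apply: sqrt_eq; [exact: ltW | rewrite hL2 pt_N // hF].
  case=> [->|[->|->]]; apply: hS => //; rewrite /F; ring.
Qed.
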